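(* Let $X$ be a smooth Calabi--Yau threefold arising as an anticanonical hypersurface in a toric variety $V$ as in the Batyrev construction from a favorable reflexive polytope, with prime toric divisor classes $[D_\rho]$. If $[D]$ is a non-trivial Hilbert basis element, then there is no expression $[D]=\sum_\rho a_\rho[D_\rho]$ with all $a_\rho\geq 0$ real such that some $a_\rho\geq 1$.
   Context: The prime toric divisors of $X$ are the restrictions $D_\rho=\hat D_\rho\cap X$ of the torus-invariant prime divisors of $V$ corresponding to nonzero lattice points of the polytope not interior to facets. $\mathcal{E}_V\subset H^2(X,\mathbb{R})$ is the cone generated by the $[D_\rho]$. The Hilbert basis of $\mathcal{E}_V$ is the minimal set of integral vectors generating all its integral points over $\mathbb{Z}_{\ge 0}$; a non-trivial Hilbert basis element is a Hilbert basis element that is not one of the $[D_\rho]$. *)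

(* Defs.v *)
(* Abstract combinatorial model of the cone E_V in H^2(X,R). *)
From mathcomp Require Import all_boot all_order all_algebra.
From mathcomp Require Export reals.
Set Implicit Arguments. Unset Strict Implicit. Unset Printing Implicit Defensive.
Import Order.TTheory GRing.Theory Num.Theory.
Local Open Scope ring_scope.

(* integral class in H^2(X,Z) = Z^h, viewed in H^2(X,R) = R^h *)
Definition realv (R : realType) (h : nat) (v : 'rV[int]_h) : 'rV[R]_h :=
  map_mx (fun z : int => z%:~R) v.

(* membership in the cone E_V generated by the classes D i = [D_rho] *)
Definition in_cone (R : realType) (h k : nat) (D : 'I_k -> 'rV[int]_h)
  (x : 'rV[R]_h) : Prop :=
  exists a : 'I_k -> R, (forall i, 0 <= a i) /\ x = \sum_i a i *: realv R (D i).

Definition pointed (R : realType) (h k : nat) (D : 'I_k -> 'rV[int]_h) : Prop :=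
  forall x : 'rV[R]_h, in_cone D x -> in_cone D (- x) -> x = 0.

Definition integral_point (R : realType) (h k : nat) (D : 'I_k -> 'rV[int]_h)
  (v : 'rV[int]_h) : Prop := in_cone D (realv R v).

Definition generates (R : realType) (h k : nat) (D : 'I_k -> 'rV[int]_h)
  (H : 'rV[int]_h -> Prop) : Prop :=
  forall v, integral_point R D v ->
    exists s : seq 'rV[int]_h, (forall w, w \in s -> H w) /\ v = \sum_(w <- s) w.

Definition is_hilbert_basis (R : realType) (h k : nat) (D : 'I_k -> 'rV[int]_h)
  (H : 'rV[int]_h -> Prop) : Prop :=
  (forall w, H w -> integral_point R D w) /\ generates R D H /\
  (forall H' : 'rV[int]_h -> Prop, (forall w, H' w -> H w) ->
      generates R D H' -> forall w, H w -> H' w).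

(* Main.v *)
Require Import Defs.
From mathcomp Require Import all_boot all_order all_algebra.
From mathcomp Require Import reals.
Import Order.TTheory GRing.Theory Num.Theory.
Local Open Scope ring_scope.

Set Implicit Arguments.
Section Aux.
Variables (R : realType) (h k : nat) (D : 'I_k -> 'rV[int]_h).

Lemma realvD (x y : 'rV[int]_h) : realv R (x + y) = realv R x + realv R y.
Proof. by apply/matrixP=> i j; rewrite !mxE intrD. Qed.
Lemma realvN (x : 'rV[int]_h) : realv R (- x) = - realv R x.
Proof. by apply/matrixP=> i j; rewrite !mxE intrN. Qed.
Lemma realv0 : realv R (0 : 'rV[int]_h) = 0.
Proof. by apply/matrixP=> i j; rewrite !mxE. Qed.
Lemma realv_inj (x y : 'rV[int]_h) : realv R x = realv R y -> x = y.
Proof.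
move/matrixP=> E; apply/matrixP=> i j; have := E i j; rewrite !mxE.
exact: intr_inj.
Qed.
Lemma realv_sum (s : seq 'rV[int]_h) :
  realv R (\sum_(w <- s) w) = \sum_(w <- s) realv R w.
Proof.
elim: s => [|x s IH]; first by rewrite !big_nil realv0.
by rewrite !big_cons realvD IH.
Qed.

Lemma cone0 : @in_cone R h k D 0.
Proof.
exists (fun _ => 0); split=> // ; by rewrite big1 // => i _; rewrite scale0r.
Qed.
Lemma coneD (x y : 'rV[R]_h) : in_cone D x -> in_cone D y -> in_cone D (x + y).
Proof.
move=> [a [a0 ->]] [b [b0 ->]]; exists (fun i => a i + b i); split.
  by move=> i; rewrite addr_ge0.
by rewrite -big_split /=; apply: eq_bigr => i _; rewrite scalerDl.
Qed.
Lemma cone_gen i : in_cone D (realv R (D i)).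
Proof.
exists (fun j => if j == i then 1 else 0); split.
  by move=> j; case: ifP.
rewrite (bigD1 i) //= eqxx scale1r big1 ?addr0 // => j /negPf ->.
by rewrite scale0r.
Qed.

Lemma cone_sum (H : 'rV[int]_h -> Prop) s :
  (forall w, H w -> integral_point R D w) -> (forall w, w \in s -> H w) ->
  in_cone D (realv R (\sum_(w <- s) w)).
Proof.
move=> HI; elim: s => [|x s IH] Hs; first by rewrite big_nil realv0; exact: cone0.
rewrite big_cons realvD; apply: coneD.
  by apply: HI; apply: Hs; rewrite mem_head.
by apply: IH => w ws; apply: Hs; rewrite in_cons ws orbT.
Qed.
End Aux.

Theorem lemma3p15 (R : realType) (h k : nat) (D : 'I_k -> 'rV[int]_h)
  (HD0 : forall i, D i != 0) (Hpt : pointed R D)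
  (H : 'rV[int]_h -> Prop) (HH : is_hilbert_basis R D H)
  (v : 'rV[int]_h) (Hv : H v) (Hnt : forall i, v != D i) :
  ~ (exists a : 'I_k -> R, (forall i, 0 <= a i) /\
       realv R v = \sum_i a i *: realv R (D i) /\ (exists i, 1 <= a i)).
Proof.
move=> [a [a0 [Ev [j aj]]]].
case: HH => [HI [Hgen Hmin]].
pose b i := if i == j then a i - 1 else a i.
have Hvj : integral_point R D (v - D j).
  exists b; split.
    by move=> i; rewrite /b; case: ifP => // /eqP ->; rewrite subr_ge0.
  rewrite realvD realvN Ev (bigD1 j) //= [in RHS](bigD1 j) //= /b eqxx.
  rewrite scalerBl scale1r addrAC; congr (_ + _).
  by apply: eq_bigr => i /negPf ->.
have [s1 [Hs1 E1]] := Hgen _ (@cone_gen R h k D j).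
have [s2 [Hs2 E2]] := Hgen _ Hvj.
have ns1 : v \notin s1.
  apply/negP => vs1.
  have Ep : \sum_(w <- s1) w = v + \sum_(w <- rem v s1) w.
    by rewrite (perm_big _ (perm_to_rem vs1)) big_cons.
  have C1 : in_cone D (realv R (D j - v)).
    rewrite E1 Ep addrAC subrr add0r.
    apply: (@cone_sum R h k D H _ HI) => w /mem_rem; exact: Hs1.
  have : realv R (v - D j) = 0.
    apply: Hpt => //; by rewrite -realvN opprB.
  rewrite -(realv0 R h) => /realv_inj /eqP; rewrite subr_eq0.
  by rewrite (negPf (Hnt j)).
have ns2 : v \notin s2.
  apply/negP => vs2.
  have Ep : \sum_(w <- s2) w = v + \sum_(w <- rem v s2) w.
    by rewrite (perm_big _ (perm_to_rem vs2)) big_cons.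
  have C1 : in_cone D (realv R (- D j)).
    have -> : - D j = \sum_(w <- rem v s2) w.
      by rewrite -(addKr v (- D j)) E2 Ep addKr.
    apply: (@cone_sum R h k D H _ HI) => w /mem_rem; exact: Hs2.
  have : realv R (D j) = 0 by apply: Hpt => //; [exact: cone_gen | rewrite -realvN].
  rewrite -(realv0 R h) => /realv_inj /eqP; by rewrite (negPf (HD0 j)).
pose H' w := H w /\ w != v.
have HvS : v = \sum_(w <- s1 ++ s2) w by rewrite big_cat /= -E1 -E2 addrC subrK.
have Hgen' : generates R D H'.
  move=> w /Hgen [s [Hs ->]]; clear w.
  elim: s Hs => [|x s IH] Hs.
    by exists [::]; split.
  rewrite big_cons.
  have [s' [Hs' ->]] : exists s' : seq 'rV[int]_h, (forall w, w \in s' -> H' w)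
      /\ \sum_(w <- s) w = \sum_(w <- s') w.
    by apply: IH => w ws; apply: Hs; rewrite in_cons ws orbT.
  have Hx : H x by apply: Hs; rewrite mem_head.
  case: (eqVneq x v) => [xv | xv].
    exists (s1 ++ s2 ++ s'); split.
      move=> w; rewrite !mem_cat => /or3P [ws|ws|ws]; last exact: Hs'.
        by split; [exact: Hs1 | apply/eqP => wv; rewrite -wv ws in ns1].
      by split; [exact: Hs2 | apply/eqP => wv; rewrite -wv ws in ns2].
    by rewrite xv catA big_cat /= -HvS.
  exists (x :: s'); split; last by rewrite big_cons.
  move=> w; rewrite in_cons => /orP [/eqP -> | ws]; last exact: Hs'.
  by split.
have := Hmin H' (fun w (Hw : H' w) => proj1 Hw) Hgen' v Hv.
by rewrite /H' eqxx => -[].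
Qed.
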